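(* Let $A,B$ be abelian groups, $i,j\geq 1$, and let $\phi:\mathcal{D}_i(A)\rightarrow\mathcal{D}_j(B)$ be a morphism. If $i>j$ then $\phi$ is constant. If $1\leq i\leq j$ then $\phi$ is also a morphism from $\mathcal{D}_1(A)$ to $\mathcal{D}_{j-i+1}(B)$.
   Context: A cube morphism $\{0,1\}^n\rightarrow\{0,1\}^m$ is a map that extends to an affine homomorphism $\mathbb{Z}^n\rightarrow\mathbb{Z}^m$. For an abelian group $A$ and $k\in\mathbb{N}$, $\mathcal{D}_k(A)$ is the set $A$ with cube sets $C^n(\mathcal{D}_k(A))$ consisting of those $f:\{0,1\}^n\rightarrow A$ such that for every cube morphism $\psi:\{0,1\}^{k+1}\rightarrow\{0,1\}^n$ we have $\sum_{v\in\{0,1\}^{k+1}}(-1)^{v_1+\dots+v_{k+1}}f(\psi(v))=0$. A morphism between such structures is a map $g$ with $g\circ c\in C^n$ of the target for every $n$ and every $c\in C^n$ of the source. *)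

(* Defs.v *)
From HB Require Import structures.
From mathcomp Require Import all_boot all_order all_algebra.
Set Implicit Arguments. Unset Strict Implicit. Unset Printing Implicit Defensive.
Import Order.TTheory GRing.Theory Num.Theory.
Local Open Scope ring_scope.

Definition cube (n : nat) := {ffun 'I_n -> bool}.

(* psi : {0,1}^n -> {0,1}^m is a cube morphism if it extends to an affine
   homomorphism Z^n -> Z^m, i.e. psi v = c + M v for some integer vector c
   and integer matrix M. *)
Definition cube_morphism (n m : nat) (psi : cube n -> cube m) : Prop :=
  exists (c : 'I_m -> int) (M : 'I_m -> 'I_n -> int),
    forall (v : cube n) (r : 'I_m),
      ((psi v r : nat) : int) = c r + \sum_(l < n) M r l * ((v l : nat) : int).

Definition alt_sum (A : zmodType) (k n : nat) (f : cube n -> A)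
  (psi : cube k.+1 -> cube n) : A :=
  \sum_(v : cube k.+1) (f (psi v)) *~ ((-1) ^+ (\sum_(l < k.+1) (v l : nat))).

Definition Dk_cube (A : zmodType) (k n : nat) (f : cube n -> A) : Prop :=
  forall psi : cube k.+1 -> cube n, cube_morphism psi -> alt_sum f psi = 0.

Definition Dk_morphism (A B : zmodType) (k l : nat) (g : A -> B) : Prop :=
  forall (n : nat) (f : cube n -> A), Dk_cube k f -> Dk_cube l (g \o f).

(* Main.v *)
Require Import Defs.
From HB Require Import structures.
From mathcomp Require Import all_boot all_order all_algebra zify.
Set Implicit Arguments. Unset Strict Implicit. Unset Printing Implicit Defensive.
Import Order.TTheory GRing.Theory Num.Theory.
Local Open Scope ring_scope.


Definition flip n (p : 'I_n) (x : cube n) : cube n :=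
  [ffun l => if l == p then ~~ x l else x l].

Lemma flipK n (p : 'I_n) : involutive (flip p).
Proof. by move=> x; apply/ffunP=> l; rewrite !ffunE; case: eqP => // _; rewrite negbK. Qed.

Definition sgn n (x : cube n) : int := (-1) ^+ (\sum_(l < n) (x l : nat)).

Lemma sgn_flip n (p : 'I_n) x : sgn (flip p x) = - sgn x.
Proof.
rewrite /sgn (bigD1 p) //= [in RHS](bigD1 p) //= !exprD ffunE eqxx.
rewrite (eq_bigr (fun l => (x l : nat))); last by move=> l /negPf Hl; rewrite ffunE Hl.
by case: (x p); rewrite /= ?expr1 ?expr0 ?mulN1r ?mul1r ?opprK.
Qed.

Lemma L1 (A : zmodType) n (p : 'I_n) (F : cube n -> A) :
  (forall x, F (flip p x) = F x) -> \sum_(x : cube n) F x *~ sgn x = 0.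
Proof.
move=> HF.
rewrite (bigID (fun x : cube n => x p)) /=.
rewrite [X in _ + X](reindex (flip p)); last first.
  by exists (flip p) => y _; rewrite flipK.
rewrite [X in _ + X](eq_bigl (fun x : cube n => x p)); last by move=> x; rewrite /= ffunE eqxx negbK.
rewrite -big_split /=; apply: big1 => x Hx.
by rewrite HF sgn_flip mulrNz addrN.
Qed.

Lemma bool01 (b : bool) : (0 <= ((b : nat) : int))%R /\ (((b : nat) : int) <= 1)%R.
Proof. by case: b. Qed.

Lemma sum_e1 k (M : 'I_k -> int) (p : 'I_k) :
  \sum_(l < k) M l * (([ffun l => l == p] : cube k) l : nat) = M p.
Proof.
rewrite (bigD1 p) //= ffunE eqxx big1 ?addr0 ?mulr1 // => l /negPf Hl.
by rewrite ffunE Hl mulr0.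
Qed.

Lemma sum_e2 k (M : 'I_k -> int) (p q : 'I_k) : p != q ->
  \sum_(l < k) M l * (([ffun l => (l == p) || (l == q)] : cube k) l : nat) = M p + M q.
Proof.
move=> npq.
rewrite (bigD1 p) //= (bigD1 q) 1?eq_sym //= !ffunE !eqxx orbT /=.
rewrite big1 ?addr0 ?mulr1 // => l /andP [/negPf H1 /negPf H2].
by rewrite ffunE H1 H2 mulr0.
Qed.

Lemma sum_e0 k (M : 'I_k -> int) :
  \sum_(l < k) M l * (([ffun l => false] : cube k) l : nat) = 0.
Proof. by rewrite big1 // => l _; rewrite ffunE mulr0. Qed.

Lemma dep_ex k n (chi : cube k.+1 -> cube n) : cube_morphism chi ->
  exists dep : 'I_n -> 'I_k.+1, forall x r p, p != dep r -> chi (flip p x) r = chi x r.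
Proof.
move=> [c [M HM]].
have key : forall r p q, p != q -> M r p = 0 \/ M r q = 0.
  move=> r p q npq.
  have h0 := HM [ffun l => false] r; rewrite sum_e0 addr0 in h0.
  have h1 := HM [ffun l => l == p] r; rewrite sum_e1 in h1.
  have h2 := HM [ffun l => l == q] r; rewrite sum_e1 in h2.
  have h3 := HM [ffun l => (l == p) || (l == q)] r; rewrite sum_e2 // in h3.
  move: h0 h1 h2 h3.
  case: (bool01 (chi [ffun=> false] r)); case: (bool01 (chi [ffun l => l == p] r)).
  case: (bool01 (chi [ffun l => l == q] r)); case: (bool01 (chi [ffun l => (l == p) || (l == q)] r)).
  lia.
exists (fun r => if [pick l | M r l != 0] is Some d then d else ord0) => x r p Hp.
have HMp : M r p = 0.
  move: Hp; case: pickP => [d Hd|H] Hp.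
    case: (key r p d Hp) => // E.
    by move: Hd; rewrite E eqxx.
  by move: (H p) => /= /negbFE /eqP.
have : ((chi (flip p x) r : nat) : int) = ((chi x r : nat) : int).
  rewrite !HM; congr (_ + _); apply: eq_bigr => l _.
  rewrite ffunE; case: eqP => [->|//]; by rewrite HMp !mul0r.
by case: (chi (flip p x) r); case: (chi x r).
Qed.

Lemma LM (A : zmodType) k n (I : finType) (rho : I -> 'I_n) (hI : (#|I| <= k)%N) (a : A)
  (chi : cube k.+1 -> cube n) : cube_morphism chi ->
  \sum_(x : cube k.+1) (a *+ (\prod_(q : I) (chi x (rho q) : nat))%N) *~ sgn x = 0.
Proof.
move=> /dep_ex [dep Hdep].
set D := [set dep (rho q) | q : I].
have cD : (#|D| <= k)%N by apply: leq_trans (leq_imset_card _ _) _.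
have : (0 < #|~: D|)%N.
  have := cardsC D; rewrite card_ord => E; lia.
rewrite card_gt0 => /set0Pn [p]; rewrite inE => HpD.
apply: (@L1 A k.+1 p (fun x => a *+ (\prod_(q : I) (chi x (rho q) : nat))%N)) => x /=; congr (_ *+ _); apply: eq_bigr => q _; rewrite Hdep //.
apply: contra HpD => /eqP ->; apply/imsetP; by exists q.
Qed.

Definition b2 (a b : bool) : cube 2 := [ffun r => if r == ord0 then a else b].

Lemma sum_ord2 (R : zmodType) (F : 'I_2 -> R) : \sum_(l < 2) F l = F ord0 + F ord_max.
Proof. by rewrite big_ord_recl big_ord1; congr (_ + F _); apply: val_inj. Qed.

Lemma sum_ord2n (F : 'I_2 -> nat) : (\sum_(l < 2) F l = F ord0 + F ord_max)%N.
Proof. by rewrite big_ord_recl big_ord1; congr (_ + F _)%N; apply: val_inj. Qed.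

Lemma b2_0 a b : b2 a b ord0 = a. Proof. by rewrite ffunE eqxx. Qed.
Lemma b2_1 a b : b2 a b ord_max = b. Proof. by rewrite ffunE. Qed.

Lemma sum_cube2 (A : zmodType) (G : cube 2 -> A) :
  \sum_(v : cube 2) G v =
  G (b2 true true) + G (b2 true false) + (G (b2 false true) + G (b2 false false)).
Proof.
rewrite (reindex (fun p : bool * bool => b2 p.1 p.2)); last first.
  exists (fun v : cube 2 => (v ord0, v ord_max)) => [[a b] _|v _] /=.
    by rewrite b2_0 b2_1.
  apply/ffunP => r; rewrite ffunE; case: eqP => [->//|ne].
  by congr (v _); apply: val_inj; case: r ne => [[|[|r]] Hr] //= ne; case: ne; apply: val_inj.
rewrite -(pair_bigA _ (fun a b => G (b2 a b))) /= !big_bool /=.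
done.
Qed.

Lemma paral (A : zmodType) n (f : cube n -> A) : Dk_cube 1 f ->
  forall (x : cube n) (t : 'I_n), x t = false ->
  f [ffun r => (r == t) || x r] = f x + f [ffun r => r == t] - f [ffun => false].
Proof.
move=> Hf x t Hxt.
pose psi (v : cube 2) : cube n := [ffun r => (v ord0 && (r == t)) || (v ord_max && x r)].
have Hpsi : cube_morphism psi.
  exists (fun _ => 0), (fun r l => if l == ord0 then (((r == t) : nat) : int) else ((x r : nat) : int)).
  move=> v r; rewrite sum_ord2 eqxx /= add0r ffunE.
  case E: (r == t).
    move/eqP: E => ->; rewrite Hxt.
    by case: (v ord0); case: (v ord_max).
  by case: (v ord0); case: (v ord_max); case: (x r).
have := Hf psi Hpsi; rewrite /alt_sum sum_cube2.
have E : forall a b, psi (b2 a b) = [ffun r => (a && (r == t)) || (b && x r)].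
  by move=> a b; apply/ffunP => r; rewrite /psi ffunE b2_0 b2_1 ffunE.
rewrite !E !sum_ord2n !b2_0 !b2_1 /=.
have -> : [ffun r => (r == t) || false] = [ffun r => r == t] :> cube n.
  by apply/ffunP => r; rewrite !ffunE orbF.
have -> : [ffun r => false || x r] = x :> cube n.
  by apply/ffunP => r; rewrite !ffunE.
rewrite expr0 expr1 !mulr1z !mulrN1z => H.
apply/eqP; rewrite -subr_eq0 -[X in _ == X]H; apply/eqP.
rewrite !opprD !opprK !addrA; congr (_ + _).
by rewrite addrAC.
Qed.

Lemma LIN (A : zmodType) n (f : cube n -> A) : Dk_cube 1 f -> forall u,
  f u = f [ffun => false] + \sum_(r < n) (f [ffun l => l == r] - f [ffun => false]) *+ u r.
Proof.
move=> Hf u.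
move: {2}(\sum_(r < n) (u r : nat))%N (leqnn (\sum_(r < n) (u r : nat))%N) => N.
elim: N u => [|N IH] u Hu.
  have u0 : u = [ffun => false].
    apply/ffunP => r; rewrite ffunE; apply/negbTE/negP => ur.
    by move: Hu; rewrite (bigD1 r) //= ur.
  by rewrite big1 ?addr0 ?u0 // => r _; rewrite ffunE.
case: (pickP (fun r => u r)) => [t ut|H]; last first.
  have u0 : u = [ffun => false] by apply/ffunP => r; rewrite ffunE H.
  by rewrite big1 ?addr0 ?u0 // => r _; rewrite ffunE.
pose x : cube n := [ffun r => (r != t) && u r].
have xt : x t = false by rewrite ffunE eqxx.
have ux : u = [ffun r => (r == t) || x r].
  apply/ffunP => r; rewrite !ffunE; case: eqP => [->|] //=.
have Sx : (\sum_(r < n) (x r : nat) <= N)%N.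
  suff : (\sum_(r < n) (u r : nat) = (\sum_(r < n) (x r : nat)).+1)%N by lia.
  rewrite (bigD1 t) // [in RHS](bigD1 t) //= ut xt /= add0n add1n; congr (_.+1).
  by apply: eq_bigr => r /negPf rt; rewrite ffunE rt.
rewrite {1}ux paral // (IH x Sx).
rewrite (bigD1 t) //= [X in _ = _ + X](bigD1 t) //= ut xt.
rewrite (eq_bigr (fun r => (f [ffun l => l == r] - f [ffun=> false]) *+ u r)); last first.
  by move=> r /negPf rt; rewrite ffunE rt.
by rewrite mulr0n mulr1n add0r [X in _ = _ + X]addrC !addrA.
Qed.

Lemma id_morph N : cube_morphism (fun x : cube N => x).
Proof.
exists (fun _ => 0), (fun r l => (((r == l) : nat) : int)) => x r.
rewrite add0r (bigD1 r) //= eqxx mul1r big1 ?addr0 // => l /negPf rl.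
by rewrite eq_sym rl mul0r.
Qed.

Lemma prod_bool w (F : 'I_w -> bool) : (\prod_(t < w) (F t : nat))%N = [forall t, F t].
Proof.
case: (boolP [forall t, F t]) => [/forallP H | /forallPn [t /negPf Ht]].
  by rewrite big1 // => t _; rewrite H.
by rewrite (bigD1 t) //= Ht mul0n.
Qed.

Lemma split_l m w (l : 'I_m) : split (lshift w l) = inl l.
Proof. exact: (unsplitK (inl l)). Qed.
Lemma split_r m w (t : 'I_w) : split (rshift m t) = inr t.
Proof. exact: (unsplitK (inr t)). Qed.

Lemma K (A B : zmodType) i j (phi : A -> B) (hphi : Dk_morphism i j phi) m w
  (e : j = (m + w)%N) (hw : (w.+1 <= i)%N) (b0 : A) (b : 'I_m.+1 -> A) :
  \sum_(v : cube m.+1) phi (b0 + \sum_(l < m.+1) b l *+ v l) *~ sgn v = 0.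
Proof.
subst j.
pose rho (l : 'I_m.+1) (q : 'I_(1 + w)) : 'I_(m.+1 + w) :=
  match split q with inl _ => lshift w l | inr t => rshift m.+1 t end.
pose g (y : cube (m.+1 + w)) : A :=
  b0 + \sum_(l < m.+1) b l *+ (\prod_(q < 1 + w) (y (rho l q) : nat))%N.
have Hg : Dk_cube i g.
  move=> chi Hchi.
  have -> : alt_sum g chi = \sum_x g (chi x) *~ sgn x by [].
  rewrite /g; under eq_bigr do rewrite mulrzDl mulrz_suml.
  rewrite big_split /= (@L1 _ _ ord0 (fun _ => b0)) // add0r exchange_big /=.
  apply: big1 => l _; apply: LM => //.
  by rewrite card_ord.
have H := hphi _ g Hg (fun x => x) (id_morph _).
change (\sum_(x : cube (m.+1 + w)) phi (g x) *~ sgn x = 0) in H.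
pose allW (x : cube (m.+1 + w)) := [forall t, x (rshift m.+1 t)].
pose proj (x : cube (m.+1 + w)) : cube m.+1 := [ffun l => x (lshift w l)].
pose ext (v : cube m.+1) : cube (m.+1 + w) :=
  [ffun r => match split r with inl l => v l | inr _ => true end].
pose h (v : cube m.+1) : A := b0 + \sum_(l < m.+1) b l *+ v l.
have G1 : forall x, g x = if allW x then h (proj x) else b0.
  move=> x; rewrite /g /h.
  have P : forall l, (\prod_(q < 1 + w) (x (rho l q) : nat))%N = (x (lshift w l) && allW x : nat).
    move=> l; rewrite big_split_ord /= big_ord1 /rho split_l.
    rewrite (eq_bigr (fun t => (x (rshift m.+1 t) : nat))); last by move=> t _; rewrite split_r.
    by rewrite prod_bool /allW; case: (x (lshift w l)); case: [forall t, _].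
  case: (boolP (allW x)) => Ha.
    by congr (_ + _); apply: eq_bigr => l _; rewrite P Ha andbT ffunE.
  by rewrite big1 ?addr0 // => l _; rewrite P (negPf Ha) andbF.
have extK : forall v, proj (ext v) = v.
  by move=> v; apply/ffunP => l; rewrite !ffunE split_l.
have allWext : forall v, allW (ext v).
  by move=> v; apply/forallP => t; rewrite ffunE split_r.
have projK : forall x, allW x -> ext (proj x) = x.
  move=> x /forallP Ha; apply/ffunP => r; rewrite ffunE -(splitK r).
  by case: (split r) => [l|t]; rewrite unsplitK /= ?ffunE ?Ha.
have sgn_ext : forall v, sgn (ext v) = sgn v * (-1) ^+ w.
  move=> v; rewrite /sgn -exprD; congr (_ ^+ _).
  rewrite big_split_ord /=; congr (_ + _)%N.
    by apply: eq_bigr => l _; rewrite ffunE split_l.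
  rewrite (eq_bigr (fun _ => 1%N)); last by move=> t _; rewrite ffunE split_r.
  by rewrite sum_nat_const card_ord muln1.
have H2 : \sum_(x : cube (m.+1 + w)) (phi (g x) - phi b0) *~ sgn x = 0.
  have Z := @L1 _ (m.+1 + w) (lshift w (ord0 : 'I_m.+1)) (fun _ => phi b0) (fun _ => erefl).
  rewrite (eq_bigr (fun x => phi (g x) *~ sgn x - phi b0 *~ sgn x)); last by move=> x _; rewrite mulrzBl.
  by rewrite sumrB H Z subr0.
rewrite (bigID allW) /= [X in _ + X]big1 ?addr0 in H2; last first.
  by move=> x /negPf Ha; rewrite G1 Ha subrr mul0rz.
rewrite (reindex_onto ext proj) /= in H2; last by move=> x Ha; rewrite projK.
rewrite (eq_bigl predT) in H2; last by move=> v; rewrite allWext extK eqxx.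
rewrite (eq_bigr (fun v => ((phi (h v) - phi b0) *~ sgn v) *~ (-1) ^+ w)) in H2; last first.
  by move=> v _; rewrite G1 allWext extK sgn_ext mulrzA.
rewrite -mulrz_suml in H2.
have X0 : \sum_(v : cube m.+1) (phi (h v) - phi b0) *~ sgn v = 0.
  rewrite -[LHS]mulr1z -(sqrr_sign int w) expr2 -mulrzA_C H2 mul0rz //.
move: X0; under eq_bigr do rewrite mulrzBl.
by rewrite sumrB (@L1 _ _ ord0 (fun _ => phi b0)) // subr0.
Qed.

Unset Implicit Arguments.
Theorem mainTheorem3 (A B : zmodType) (i j : nat) (hi : (1 <= i)%N) (hj : (1 <= j)%N)
  (phi : A -> B) (hphi : Dk_morphism i j phi) :
  ((j < i)%N -> forall a a' : A, phi a = phi a') /\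
  ((i <= j)%N -> Dk_morphism 1 (j - i + 1) phi).
Proof.
split.
  move=> hij.
  suff E : forall a, phi a = phi 0 by move=> a a'; rewrite !E.
  move=> a.
  have H := @K A B i j phi hphi 0 j (esym (add0n j)) hij 0 (fun _ => a).
  rewrite (bigID (fun v : cube 1 => v ord0)) /= in H.
  rewrite (@big_pred1 _ _ _ _ [ffun => true]) in H; last first.
    move=> v; apply/idP/eqP => [Hv|->]; last by rewrite ffunE.
    by apply/ffunP => r; rewrite ffunE (ord1 r).
  rewrite (@big_pred1 _ _ _ _ [ffun => false]) in H; last first.
    move=> v; apply/idP/eqP => [Hv|->]; last by rewrite ffunE.
    by apply/ffunP => r; rewrite ffunE (ord1 r); apply/negbTE.
  move: H; rewrite /sgn !big_ord1 !ffunE /= add0r mulr1n mulr0n expr1 expr0 mulrN1z mulr1z.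
  by rewrite addr0 addrC => /eqP; rewrite subr_eq0 => /eqP.
move=> hij n f Hf psi Hpsi.
have [c [M HM]] := Hpsi.
pose d r := f [ffun l => l == r] - f [ffun => false].
pose b0 := f [ffun => false] + \sum_(r < n) d r *~ c r.
pose b (l : 'I_(j - i + 1).+1) := \sum_(r < n) d r *~ M r l.
have Ef : forall v, f (psi v) = b0 + \sum_(l < (j - i + 1).+1) b l *+ v l.
  move=> v; rewrite (LIN Hf) /b0 -addrA; congr (_ + _).
  rewrite (eq_bigr (fun r => d r *~ c r + \sum_(l < (j - i + 1).+1) (d r *~ M r l) *+ v l)); last first.
    move=> r _; rewrite pmulrn HM mulrzDr mulrz_sumr; congr (_ + _).
    by apply: eq_bigr => l _; rewrite mulrzA pmulrn.
  rewrite big_split /=; congr (_ + _).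
  rewrite exchange_big /=; apply: eq_bigr => l _.
  by rewrite sumrMnl.
have := @K A B i j phi hphi (j - i + 1) (i - 1) ltac:(lia) ltac:(lia) b0 b.
move=> <-.
rewrite /alt_sum; apply: eq_bigr => v _ /=.
by rewrite Ef.
Qed.
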